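(* Let $m\ge1$ and consider $Q_{2,m+1}$ with dimension vector $\alpha=(m,1;1,\dots,1)$ ($m+1$ sinks, each of dimension $1$). Then the graded ring of semi-invariants $\bigoplus_{k\ge0}\{f\in\mathbb{C}[\mathrm{Rep}_\alpha Q]: f(g\cdot V)=\chi_\theta(g)^kf(V)\ \forall g\}$ is a polynomial ring in $m+1$ algebraically independent generators of degree $1$; consequently $M^{ss}_\alpha(Q_{2,m+1},\theta)\cong\mathbb{P}^m$.
   Context: $Q_{p,q}$ is the bipartite quiver with $p$ source vertices $v_1,\dots,v_p$, $q$ sink vertices $w_1,\dots,w_q$, and exactly one arrow from each $v_i$ to each $w_j$; a dimension vector is written $\alpha=(a_1,\dots,a_p;b_1,\dots,b_q)$, $\mathrm{Rep}_\alpha Q=\prod_{i,j}\mathrm{Hom}_{\mathbb{C}}(\mathbb{C}^{a_i},\mathbb{C}^{b_j})$, and $\mathrm{GL}_\alpha=\prod_i\mathrm{GL}_{a_i}\times\prod_j\mathrm{GL}_{b_j}$ acts by base change. $\theta=(-1,\dots,-1;1,\dots,1)$, $\chi_\theta(g)=\prod_i\det(g_i)^{-1}\prod_j\det(h_j)$ for $g=(g_1,\dots,g_p;h_1,\dots,h_q)$, and $M^{ss}_\alpha(Q,\theta)=\mathrm{Proj}$ of the graded ring of semi-invariants of weights $\chi_\theta^k$, $k\ge0$ (the moduli space of $\theta$-semistable representations). *)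

(* Defs.v *)
From HB Require Import structures.
From mathcomp Require Import all_boot all_order all_algebra.
From mathcomp Require Import reals.
From mathcomp Require Import complex.
From mathcomp Require Import mpoly.
Set Implicit Arguments. Unset Strict Implicit. Unset Printing Implicit Defensive.
Import GRing.Theory.
Local Open Scope ring_scope.

(* The field of complex numbers is modelled as  R[i]  for R : realType
   (every realType is the field of real numbers, so R[i] is C).          *)

(* Quiver Q_{2,m+1}: sources v_1, v_2, sinks w_0..w_m; alpha = (m,1;1,...,1).
   A representation V in Rep_alpha Q is a pair of families
     V1 j : Hom(C^m, C)  = 'M_(1,m)   (arrow v_1 -> w_j)
     V2 j : Hom(C^1, C)  = 'M_(1,1)   (arrow v_2 -> w_j). *)

Section QuiverQ2.
Variable C : fieldType.
Variable m : nat.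

Definition rep1 := 'I_m.+1 -> 'M[C]_(1, m).
Definition rep2 := 'I_m.+1 -> 'M[C]_(1, 1).

Definition ncoord := (m.+1 * (m + 1))%N.

Definition coords (V1 : rep1) (V2 : rep2) : 'I_ncoord -> C :=
  fun k => mxvec (row_mx (\matrix_(j < m.+1, l < m) V1 j 0 l)
                         (\matrix_(j < m.+1, l < 1) V2 j 0 l)) 0 k.

Definition evalRep (f : {mpoly C[ncoord]}) (V1 : rep1) (V2 : rep2) : C :=
  f.@[coords V1 V2].

Definition inGL (g1 : 'M[C]_m) (g2 : 'M[C]_1) (h : 'I_m.+1 -> 'M[C]_1) :=
  [/\ g1 \in unitmx, g2 \in unitmx & forall j, h j \in unitmx].

Definition act1 g1 (h : 'I_m.+1 -> 'M[C]_1) (V1 : rep1) : rep1 :=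
  fun j => h j *m V1 j *m invmx g1.
Definition act2 g2 (h : 'I_m.+1 -> 'M[C]_1) (V2 : rep2) : rep2 :=
  fun j => h j *m V2 j *m invmx g2.

Definition chi_theta (g1 : 'M[C]_m) (g2 : 'M[C]_1) (h : 'I_m.+1 -> 'M[C]_1) : C :=
  (\det g1)^-1 * (\det g2)^-1 * \prod_(j < m.+1) \det (h j).

Definition semi_invariant (k : nat) (f : {mpoly C[ncoord]}) : Prop :=
  forall g1 g2 h, inGL g1 g2 h ->
  forall V1 V2, evalRep f (act1 g1 h V1) (act2 g2 h V2)
                = chi_theta g1 g2 h ^+ k * evalRep f V1 V2.

End QuiverQ2.

(* Main.v *)
Require Import Defs.
From HB Require Import structures.
From mathcomp Require Import all_boot all_order all_algebra.
From mathcomp Require Import reals.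
From mathcomp Require Import complex.
From mathcomp Require Import mpoly.
From mathcomp Require Import ring.
From Stdlib Require Import FunctionalExtensionality.
Import GRing.Theory.
Local Open Scope ring_scope.

Module Aux.
Import Num.Theory.
Section Vanish.
Variable R : idomainType.

Lemma poly_vanish (hinj : injective (fun n : nat => n%:R : R)) (p : {poly R}) :
  (forall x, p.[x] = 0) -> p = 0.
Proof.
move=> hp; apply/eqP; apply/negPn/negP => pn0.
pose rs := [seq (i%:R : R) | i <- iota 0 (size p)].
have : (size rs < size p)%N.
  apply: max_poly_roots pn0 _ _.
    by apply/allP => x /mapP [i _ ->]; rewrite /root hp.
  by rewrite map_inj_uniq ?iota_uniq.
by rewrite size_map size_iota ltnn.
Qed.

Local Notation wd i := (widen_ord (leqnSn _) i).

Lemma muni_eval n (p : {mpoly R[n.+1]}) v :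
  p.@[v] = (map_poly (meval (fun i => v (wd i))) (muni p)).[v ord_max].
Proof.
rewrite mevalE muniE rmorph_sum horner_sum; apply: eq_bigr => m _.

rewrite /= map_polyZ hornerZ map_polyXn hornerXn /= mevalZ mevalX.
rewrite big_ord_recr /= mulrA; congr (_ * _ * _).
by apply: eq_bigr => i _; rewrite mnmE.
Qed.

Lemma muni_coef n (p : {mpoly R[n.+1]}) (m : 'X_{1..n.+1}) :
  ((muni p)`_(m ord_max))@_[multinom [tuple m (wd i) | i < n]] = p@_m.
Proof.
rewrite muniE coef_sum (raddf_sum (mcoeff _)) /=.
rewrite [in RHS](mpolyE p) (raddf_sum (mcoeff _)) /=; apply: eq_bigr => m' _.
rewrite coefZ coefXn mcoeffZ mcoeffX.
rewrite mulr_natr mcoeffMn mcoeffZ mcoeffX.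
rewrite -mulrnAr -mulrnA mulnb; congr (_ * _%:R); congr nat_of_bool.
apply/idP/idP.
  move=> /andP[/eqP e2 /eqP e1]; apply/eqP/mnmP => i.
  have [j ->|] := unliftP ord_max i.
    have := congr1 (fun mm : 'X_{1..n} => mm j) e2.
    rewrite !mnmE /=.
    suff -> : lift ord_max j = wd j by [].
    by apply/val_inj; rewrite /= /bump leqNgt ltn_ord.
  by move=> ->; rewrite e1.
by move=> /eqP ->; rewrite !eqxx.
Qed.

Lemma mpoly_vanish (hinj : injective (fun n : nat => n%:R : R)) n (p : {mpoly R[n]}) : (forall v, p.@[v] = 0) -> p = 0.
Proof.
elim: n p => [|n IH] p hp.
  rewrite (nvar0_mpolyC p); have := hp (fun _ => 0).
  by rewrite {1}(nvar0_mpolyC p) mevalC => ->.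
have hc : forall k, (muni p)`_k = 0.
  move=> k; apply: IH => v'.
  pose F := map_poly (meval v') (muni p).
  have F0 : F = 0.
    apply: (poly_vanish hinj) => x.
    pose v : 'I_n.+1 -> R := fun i => oapp v' x (insub (val i)).
    have := hp v; rewrite muni_eval => h.
    have -> : x = v ord_max by rewrite /v insubF //= ltnn.
    rewrite -h /F; congr (_.[_]); congr map_poly; apply: functional_extensionality => q; apply: meval_eq => j.
    rewrite /v; case: insubP => [j' _ /= e|]; last by rewrite /= ltn_ord.
    by congr v'; apply: val_inj.
  by have := congr1 (fun q : {poly R} => q`_k) F0; rewrite coef0 /F coef_map.
apply/mpolyP => m; rewrite mcoeff0 -muni_coef hc mcoeff0 //.
Qed.
End Vanish.

Section Main.
Variable C : fieldType.
Variable m : nat.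
Local Notation N := (ncoord m).
Local Notation wd i := (widen_ord (leqnSn _) i).

Definition Mat (V1 : rep1 C m) (V2 : rep2 C m) : 'M[C]_(m.+1, m + 1) :=
  row_mx (\matrix_(j < m.+1, l < m) V1 j 0 l) (\matrix_(j < m.+1, l < 1) V2 j 0 l).

Lemma coordsE V1 V2 k : coords V1 V2 k = mxvec (Mat V1 V2) 0 k.
Proof. by []. Qed.

Definition XM : 'M[{mpoly C[N]}]_(m.+1, m + 1) := locked (vec_mx (\row_k 'X_k)).

Lemma evalXM V1 V2 a b : (XM a b).@[coords V1 V2] = Mat V1 V2 a b.
Proof.
have : map_mx (meval (coords V1 V2)) XM = Mat V1 V2.
  rewrite /XM -lock map_vec_mx -[RHS]mxvecK; congr vec_mx.
  by apply/rowP => k; rewrite !mxE mevalXU.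
by move/matrixP/(_ a b); rewrite mxE.
Qed.

Definition sel (j : 'I_m.+1) (i : 'I_m) : 'I_m.+1 :=
  if (i : nat) == j then ord_max else wd i.

Definition Bmat (V1 : rep1 C m) j : 'M[C]_m := \matrix_(i, l) V1 (sel j i) 0 l.
Definition Dl V1 j := \det (Bmat V1 j).
Definition Fv (V1 : rep1 C m) (V2 : rep2 C m) j := V2 j 0 0 * Dl V1 j.

Definition BP j : 'M[{mpoly C[N]}]_m := \matrix_(i, l) XM (sel j i) (lshift 1 l).
Definition FP j := XM j (rshift m ord0) * \det (BP j).
Definition FPt := [tuple FP j | j < m.+1].

Lemma evalBP V1 V2 j : (\det (BP j)).@[coords V1 V2] = Dl V1 j.
Proof.
rewrite -(det_map_mx (meval (coords V1 V2))); congr (\det _).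
apply/matrixP => i l; rewrite !mxE.
by have := evalXM V1 V2 (sel j i) (lshift 1 l); rewrite /Mat row_mxEl mxE.
Qed.

Lemma evalFP V1 V2 j : (FP j).@[coords V1 V2] = Fv V1 V2 j.
Proof.
by rewrite /FP mevalM evalBP evalXM /Mat row_mxEr mxE.
Qed.


Lemma sel_max i : sel ord_max i = wd i.
Proof. by rewrite /sel /= ltn_eqF. Qed.

Lemma lift_max (j0 : 'I_m) : lift ord_max j0 = wd j0.
Proof. by apply/val_inj; rewrite /= /bump leqNgt ltn_ord. Qed.

Lemma sel_wd (j0 i : 'I_m) : sel (wd j0) i = if i == j0 then ord_max else wd i.
Proof. by rewrite /sel /=. Qed.

Lemma Cramer V1 (j : 'I_m) :
  Dl V1 (wd j) = (V1 ord_max *m \adj (Bmat V1 ord_max)) 0 j.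
Proof.
rewrite /Dl (expand_det_row _ j) mxE; apply: eq_bigr => l _.
rewrite /adjugate !mxE sel_wd eqxx; congr (_ * _).
rewrite /cofactor; congr (_ * \det _).
apply/matrixP => a b; rewrite !mxE sel_wd sel_max.
by rewrite eq_sym (negbTE (neq_lift j a)).
Qed.

Lemma prodsel (f : 'I_m.+1 -> C) j :
  (\prod_i f (sel j i)) * f j = \prod_i f i.
Proof.
rewrite [RHS]big_ord_recr /=.
have [j0 ->|->] := unliftP ord_max j.
  rewrite lift_max (bigD1 j0) //= [in RHS](bigD1 j0) //= sel_wd eqxx.
  rewrite (eq_bigr (fun i => f (wd i))); last first.
    by move=> i /negbTE ne; rewrite sel_wd ne.
  ring.
by rewrite (eq_bigr (fun i => f (wd i))) // => i _; rewrite sel_max.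
Qed.

Lemma mx11E (A B : 'M[C]_1) : (A *m B) 0 0 = A 0 0 * B 0 0.
Proof. by rewrite mxE big_ord1. Qed.

Lemma Fv_semi g1 g2 h V1 V2 j :
  Fv (act1 g1 h V1) (act2 g2 h V2) j = chi_theta g1 g2 h * Fv V1 V2 j.
Proof.
have hB : Bmat (act1 g1 h V1) j =
    diag_mx (\row_i h (sel j i) 0 0) *m Bmat V1 j *m invmx g1.
  apply/matrixP => i l; rewrite /act1 mul_diag_mx !mxE; apply: eq_bigr => k _.
  by rewrite !mxE big_ord1.
rewrite /Fv /Dl hB !det_mulmx det_inv det_diag /act2 !mx11E.
have -> : invmx g2 0 0 = (\det g2)^-1 by rewrite -det_inv det_mx11.
rewrite /chi_theta (eq_bigr (fun i => h i 0 0)); last by move=> i _; rewrite det_mx11.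
rewrite -(prodsel (fun i => h i 0 0) j).
rewrite (eq_bigr (fun i => h (sel j i) 0 0)); last by move=> i _; rewrite mxE.
ring.
Qed.

Definition NV1 : rep1 C m :=
  fun j => \row_l (if j == ord_max then 1 else ((j : nat) == l)%:R).
Definition NV2 (y : 'I_m.+1 -> C) : rep2 C m := fun j => (y j)%:M.

Lemma wd_neq_max (i : 'I_m) : (wd i == ord_max) = false.
Proof. by apply/negbTE; rewrite -val_eqE /= ltn_eqF. Qed.

Lemma Bmat_NV1_max : Bmat NV1 ord_max = 1%:M.
Proof.
by apply/matrixP => i l; rewrite !mxE sel_max wd_neq_max.
Qed.

Lemma Dl_NV1 j : Dl NV1 j = 1.
Proof.
have [j0 ->|->] := unliftP ord_max j.
  rewrite lift_max Cramer Bmat_NV1_max adj1 mulmx1 mxE eqxx //.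
by rewrite /Dl Bmat_NV1_max det1.
Qed.

Lemma orbit (f : {mpoly C[N]}) k V1 V2 : semi_invariant k f ->
  (forall j, Dl V1 j != 0) ->
  evalRep f V1 V2 = evalRep f NV1 (NV2 (Fv V1 V2)).
Proof.
move=> hsemi hD.
pose B := Bmat V1 ord_max.
pose d := \row_i Dl V1 (wd i).
have hd : d *m B = Dl V1 ord_max *: V1 ord_max.
  have -> : d = V1 ord_max *m \adj B by apply/rowP => i; rewrite mxE Cramer.
  by rewrite -mulmxA mul_adj_mx mul_mx_scalar.
pose g1 := diag_mx d *m B.
pose h := fun j => (Dl V1 j)%:M : 'M[C]_1.
have detg1 : \det g1 = \prod_j Dl V1 j.
  rewrite det_mulmx det_diag [RHS]big_ord_recr /=; congr (_ * _).
  by apply: eq_bigr => i _; rewrite mxE.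
have pn0 : \prod_j Dl V1 j != 0 by apply/prodf_neq0 => j _.
have g1u : g1 \in unitmx by rewrite unitmxE unitfE detg1.
have hGL : inGL g1 1%:M h.
  split; [exact: g1u | exact: unitmx1 | move=> j].
  by rewrite unitmxE unitfE det_scalar1.
have e1 : act1 g1 h V1 = NV1.
  apply: functional_extensionality => j; rewrite /act1.
  suff <- : NV1 j *m g1 = h j *m V1 j by rewrite mulmxK.
  rewrite /h mul_scalar_mx /g1 mulmxA.
  have [j0 ->|->] := unliftP ord_max j.
    rewrite lift_max.
    have -> : NV1 (wd j0) *m diag_mx d = Dl V1 (wd j0) *: delta_mx 0 j0.
      apply/rowP => l; rewrite mul_mx_diag !mxE wd_neq_max /=.
      rewrite val_eqE; case: eqP => [->|ne]; rewrite ?eqxx ?mul1r ?mulr1 //; rewrite (introF eqP (nesym ne)) mul0r mulr0 //.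
    rewrite -scalemxAl -rowE; congr (_ *: _).
    by apply/rowP => l; rewrite !mxE sel_max.
  have -> : NV1 ord_max *m diag_mx d = d.
    by apply/rowP => l; rewrite mul_mx_diag !mxE eqxx mul1r.
  exact: hd.
have e2 : act2 1%:M h V2 = NV2 (Fv V1 V2).
  apply: functional_extensionality => j.
  rewrite /act2 invmx1 mulmx1 /h mul_scalar_mx; apply/matrixP => a b.
  by rewrite !ord1 !mxE /Fv mulrC eqxx mulr1n.
have chi1 : chi_theta g1 1%:M h = 1.
  rewrite /chi_theta detg1 det1 invr1 mulr1.
  have -> : \prod_j \det (h j) = \prod_j Dl V1 j.
    by apply: eq_bigr => j _; rewrite det_scalar1.
  by rewrite mulVf.
have := hsemi _ _ _ hGL V1 V2; rewrite e1 e2 chi1 expr1n mul1r.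
by move=> ->.
Qed.

Definition NM : 'M[{mpoly C[m.+1]}]_(m.+1, m + 1) :=
  row_mx (\matrix_(j < m.+1, l < m) (NV1 j 0 l)%:MP) (\matrix_(j < m.+1, l < 1) 'X_j).
Definition Nt : N.-tuple {mpoly C[m.+1]} := [tuple mxvec NM 0 k | k < N].

Lemma evalNt y k : (tnth Nt k).@[y] = coords NV1 (NV2 y) k.
Proof.
rewrite tnth_mktuple coordsE.
have e : map_mx (meval y) NM = Mat NV1 (NV2 y).
  rewrite /NM map_row_mx; congr row_mx; apply/matrixP => a b.
    by rewrite !mxE mevalC.
  by rewrite !ord1 !mxE mevalXU eqxx mulr1n.
by rewrite -e -map_mxvec mxE.
Qed.

Lemma Fv_N y j : Fv NV1 (NV2 y) j = y j.
Proof. by rewrite /Fv Dl_NV1 mulr1 mxE eqxx mulr1n. Qed.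

Lemma decode (v : 'I_N -> C) : exists V1 V2, coords V1 V2 =1 v.
Proof.
pose Mv : 'M[C]_(m.+1, m + 1) := vec_mx (\row_k v k).
exists (fun j => \row_l Mv j (lshift 1 l)), (fun j => \row_l Mv j (rshift m l)).
have e : Mat (fun j => \row_l Mv j (lshift 1 l)) (fun j => \row_l Mv j (rshift m l)) = Mv.
  rewrite -[RHS]hsubmxK; congr row_mx; apply/matrixP => a b; by rewrite !mxE.
move=> k; rewrite coordsE e /Mv vec_mxK mxE //.
Qed.

Theorem mainC (hinj : injective (fun n : nat => n%:R : C)) :
  exists F : (m.+1).-tuple {mpoly C[N]},
    [/\ (forall j : 'I_m.+1, semi_invariant 1 (tnth F j)),
        (forall p : {mpoly C[m.+1]}, comp_mpoly F p = 0 -> p = 0) &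
        (forall (k : nat) (f : {mpoly C[N]}),
           semi_invariant k f -> exists p : {mpoly C[m.+1]}, f = comp_mpoly F p)].
Proof.
exists FPt; split.
- move=> j g1 g2 h _ V1 V2.
  by rewrite /evalRep tnth_mktuple !evalFP Fv_semi expr1.
- move=> p hp; apply: (@mpoly_vanish C hinj) => y.
  have := congr1 (meval (coords NV1 (NV2 y))) hp.
  rewrite comp_mpoly_meval meval0 => <-.
  by apply: meval_eq => i; rewrite tnth_mktuple evalFP Fv_N.
move=> k f hs; exists (comp_mpoly Nt f).
pose g := f - comp_mpoly FPt (comp_mpoly Nt f).
pose D := \prod_j \det (BP j).
have gD : g * D = 0.
  apply: (@mpoly_vanish C hinj) => v; have [V1 [V2 hv]] := decode v.
  rewrite -(meval_eq _ hv) mevalM rmorph_prod /=.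
  rewrite (eq_bigr (fun j => Dl V1 j)); last by move=> j _; rewrite evalBP.
  case: (boolP [forall j, Dl V1 j != 0]) => [/forallP hD|].
    rewrite /g mevalB comp_mpoly_meval.
    have e1 : (fun i => (tnth FPt i).@[coords V1 V2]) = Fv V1 V2.
      by apply: functional_extensionality => i; rewrite tnth_mktuple evalFP.
    rewrite e1 comp_mpoly_meval.
    have e2 : (fun i => (tnth Nt i).@[Fv V1 V2]) = coords NV1 (NV2 (Fv V1 V2)).
      by apply: functional_extensionality => i; rewrite evalNt.
    rewrite e2.
    have := orbit f k V1 V2 hs hD; rewrite /evalRep => <-.
    by rewrite subrr mul0r.
  move/forallPn => [j /negPn /eqP hj].
  by rewrite (bigD1 j) //= hj mul0r mulr0.
have Dn0 : D != 0.
  apply/eqP => D0; have := congr1 (meval (coords NV1 (NV2 (fun _ => 0)))) D0.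
  rewrite meval0 rmorph_prod /= (eq_bigr (fun _ => 1)); last by move=> j _; rewrite evalBP Dl_NV1.
  by rewrite big1_eq => /eqP; rewrite oner_eq0.
apply/eqP; rewrite -subr_eq0; move/eqP: gD; rewrite mulf_eq0 (negbTE Dn0) orbF //.
Qed.

End Main.
End Aux.

Theorem mainTheorem7 (R : realType) (m : nat) (hm : (1 <= m)%N) :
  exists F : (m.+1).-tuple {mpoly R[i][ncoord m]},
    [/\ (* generators of degree 1 : semi-invariants of weight chi_theta *)
        (forall j : 'I_m.+1, semi_invariant 1 (tnth F j)),
        (* algebraically independent *)
        (forall p : {mpoly R[i][m.+1]}, comp_mpoly F p = 0 -> p = 0) &
        (* they generate the ring of semi-invariants (every homogeneous
           component SI_k, hence the whole graded ring) *)
        (forall (k : nat) (f : {mpoly R[i][ncoord m]}),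
           semi_invariant k f -> exists p : {mpoly R[i][m.+1]}, f = comp_mpoly F p)].
Proof.
have hinj : injective (fun n : nat => n%:R : R[i]).
  by move=> a b /eqP; rewrite Num.Theory.eqr_nat => /eqP.
have H := @Aux.mainC (R[i]) m hinj.
exact H.
Qed.
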